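(* Let $a\ge 2$ be even, and let $c,e$ be odd integers with $0<c<e\le\frac a2$. Then $U=\{(a,-a),(c,-c),(e,-e)\}\subseteq\mathcal{B}$ is unavoidable.
   Context: The bicyclic inverse semigroup is $\mathcal{B}=\{(a,b)\in\mathbb{Z}\times\mathbb{Z}\mid a\ge 0,\ a+b\ge 0\}$ with multiplication $(a,b)(c,d)=(\max\{c+d,a\}-d,\ b+d)$. A subset $U\subseteq\mathcal{B}$ is called avoidable if $\mathcal{B}$ can be partitioned into two subsets $A$ and $B$ such that no element of $U$ can be written as a product $xy$ of two distinct elements $x\neq y$ both in $A$, or both in $B$. A set is unavoidable if it is not avoidable. *)

(* Defs.v *)
From Stdlib Require Import ZArith.
Open Scope Z_scope.

(* Elements of the bicyclic inverse semigroup, represented as pairs of integers. *)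
Definition inB (x : Z * Z) : Prop := 0 <= fst x /\ 0 <= fst x + snd x.

Definition bmul (x y : Z * Z) : Z * Z :=
  (Z.max (fst y + snd y) (fst x) - snd y, snd x + snd y).

(* A partition of B into two parts A and B\A is encoded by the predicate
   "in A"; the second part is its complement within B. Parts may be empty. *)
Definition avoids_by (P : Z * Z -> Prop) (U : Z * Z -> Prop) : Prop :=
  forall x y : Z * Z, inB x -> inB y -> x <> y ->
    (P x <-> P y) -> ~ U (bmul x y).

Definition avoidable (U : Z * Z -> Prop) : Prop :=
  exists P : Z * Z -> Prop, avoids_by P U.

Definition unavoidable (U : Z * Z -> Prop) : Prop := ~ avoidable U.

(* Main.v *)
Require Import Defs.
From Stdlib Require Import ZArith Lia Classical.
Open Scope Z_scope.

Theorem proposition3p4 (a c e : Z) :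
  2 <= a -> Z.Even a -> Z.Odd c -> Z.Odd e ->
  0 < c -> c < e -> 2 * e <= a ->
  unavoidable (fun u => u = (a, - a) \/ u = (c, - c) \/ u = (e, - e)).
Proof.
  intros ha [k hk] [m hm] [j hj] hc0 hce hea2 [P HP].
  set (x := (k + j - m, - (k + j - m))).
  set (q := (k - j + m, - (k - j + m))).
  set (y := (c, (k - j + m) - c)).
  assert (E1 : bmul q x = (a, - a)).
  { unfold bmul, q, x; simpl. rewrite Z.max_r by lia. f_equal; lia. }
  assert (E2 : bmul q y = (c, - c)).
  { unfold bmul, q, y; simpl. rewrite Z.max_r by lia. f_equal; lia. }
  assert (E3 : bmul x y = (e, - e)).
  { unfold bmul, x, y; simpl. rewrite Z.max_r by lia. f_equal; lia. }
  assert (Ix : inB x) by (unfold inB, x; simpl; lia).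
  assert (Iq : inB q) by (unfold inB, q; simpl; lia).
  assert (Iy : inB y) by (unfold inB, y; simpl; lia).
  assert (Nqx : q <> x) by (unfold q, x; intro H; inversion H; lia).
  assert (Nqy : q <> y) by (unfold q, y; intro H; inversion H; lia).
  assert (Nxy : x <> y) by (unfold x, y; intro H; inversion H; lia).
  destruct (classic (P q)); destruct (classic (P x)); destruct (classic (P y)).
  all: first
    [ apply (HP q x Iq Ix Nqx); [tauto | rewrite E1; auto]
    | apply (HP q y Iq Iy Nqy); [tauto | rewrite E2; auto]
    | apply (HP x y Ix Iy Nxy); [tauto | rewrite E3; auto] ].
Qed.
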